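(* Let $\mathbb{F}$ be a field of characteristic $2$. The voltage assignment $\ell$ on $\widetilde H_3(\mathbb{F})$ is reductive, i.e. for all vertices $u,v,w$ of $\widetilde H_3(\mathbb{F})$ with $u\sim v$ and $v\perp w$ we have $\ell(w,u)=\ell(w,v)$.
   Context: Let $V=\mathbb{F}^4$, $V^*$ its dual. $\widetilde H_3(\mathbb{F})$ is the graph whose vertices are tensors $v\otimes f\in V\otimes V^*$ with $f(v)\neq0$, with $v\otimes f\perp w\otimes g$ iff $f(w)=g(v)=0$; $u\sim v$ means $u,v$ have the same neighbours. Let $W=\bigwedge^2V$, fix an isomorphism $\chi:\bigwedge^4V\to\mathbb{F}$, identify $\bigwedge^2V^*$ with $(\bigwedge^2V)^*$ via $(f_1\wedge f_2)(v_1\wedge v_2)=f_1(v_1)f_2(v_2)-f_1(v_2)f_2(v_1)$, let $\psi:\bigwedge^2V\to\bigwedge^2V^*$ be $\psi(\hat w)(\hat v)=\chi(\hat v\wedge\hat w)$ and $\phi=\psi^{-1}$. $S_2(W)$ is the symmetric square of $W$ (product $ab$). $\ell$ assigns to the dart from $v_1\otimes h_1$ to $v_2\otimes h_2$ the element $h_1(v_1)^{-1}h_2(v_2)^{-1}(v_1\wedge v_2)\,\phi(h_1\wedge h_2)$ of the additive group $S_2(W)$. *)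

(* Defs.v *)
From HB Require Import structures.
From mathcomp Require Import all_boot all_order all_algebra.
From mathcomp Require Import mpoly.
Set Implicit Arguments. Unset Strict Implicit. Unset Printing Implicit Defensive.
Import GRing.Theory.
Local Open Scope ring_scope.

Section H3.
Variable F : fieldType.

(* V = F^4 (row vectors), V^* = F^4 via the dual basis. *)
Definition vec := 'rV[F]_4.
Definition covec := 'rV[F]_4.
Definition ev (f : covec) (v : vec) : F := \sum_(i < 4) f 0 i * v 0 i.

(* A vertex v (x) f is represented by a pair (v, f) with f(v) <> 0;
   all notions below are invariant under (v,f) |-> (a v, a^-1 f). *)
Definition vertex := (vec * covec)%type.
Definition is_vertex (x : vertex) : Prop := ev x.2 x.1 != 0.

Definition perp (x y : vertex) : Prop := ev x.2 y.1 = 0 /\ ev y.2 x.1 = 0.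

Definition same_nbrs (x y : vertex) : Prop :=
  forall z : vertex, is_vertex z -> (perp x z <-> perp y z).

(* The basis of /\^2 F^4 : e_(pi1 P) /\ e_(pi2 P), for the six pairs
   (0,1),(0,2),(0,3),(1,2),(1,3),(2,3). *)
Definition pi1 (P : 'I_6) : 'I_4 := inord (nth 0%N [:: 0; 0; 0; 1; 1; 2]%N P).
Definition pi2 (P : 'I_6) : 'I_4 := inord (nth 0%N [:: 1; 2; 3; 2; 3; 3]%N P).

(* W = /\^2 V  ~=  F^6 ; a /\ b in coordinates (Pluecker coordinates).
   Applied to covectors, this gives h1 /\ h2 in /\^2 V^*, whose coordinates
   are exactly its values (h1/\h2)(e_i/\e_j) = h1(e_i)h2(e_j) - h1(e_j)h2(e_i),
   i.e. /\^2 V^* is identified with (/\^2 V)^* as in the paper. *)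
Definition wedge2 (a b : 'rV[F]_4) : 'rV[F]_6 :=
  \row_P (a 0 (pi1 P) * b 0 (pi2 P) - a 0 (pi2 P) * b 0 (pi1 P)).

Definition rows4 (a b c d : 'I_4) : 'M[F]_4 :=
  \matrix_(r < 4, s < 4) ((s == nth a [:: a; b; c; d] r)%:R).

(* chi : /\^4 V -> F, an isomorphism, is  chi = k * det  with k <> 0:
   chi(e_a /\ e_b /\ e_c /\ e_d) = k * det(rows4 a b c d). *)
Definition chi4 (k : F) (a b c d : 'I_4) : F := k * \det (rows4 a b c d).

(* Matrix of psi : W -> W^* (row-vector convention, W^* in the dual basis):
   psi(w)(e_P) = chi(e_P /\ w), so (psiMat)_{Q,P} = chi(e_P /\ e_Q). *)
Definition psiMat (k : F) : 'M[F]_6 :=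
  \matrix_(Q < 6, P < 6) chi4 k (pi1 P) (pi2 P) (pi1 Q) (pi2 Q).
Definition psi (k : F) (w : 'rV[F]_6) : 'rV[F]_6 := w *m psiMat k.
Definition phi (k : F) (g : 'rV[F]_6) : 'rV[F]_6 := g *m invmx (psiMat k).

(* S_2(W): the degree-2 part of the symmetric algebra of W, realised as
   polynomials in 6 variables (W = linear forms); the product ab in S_2(W)
   is the product of polynomials. *)
Definition linform (a : 'rV[F]_6) : {mpoly F[6]} := \sum_(i < 6) a 0 i *: 'X_i.
Definition sym2 (a b : 'rV[F]_6) : {mpoly F[6]} := linform a * linform b.

Definition ell (k : F) (x y : vertex) : {mpoly F[6]} :=
  ((ev x.2 x.1)^-1 * (ev y.2 y.1)^-1) *:
    sym2 (wedge2 x.1 y.1) (phi k (wedge2 x.2 y.2)).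

End H3.

(* Main.v *)
Require Import Defs.
From HB Require Import structures.
From mathcomp Require Import all_boot all_order all_algebra.
From mathcomp Require Import mpoly.
From mathcomp Require Import ring.
Import GRing.Theory.
Local Open Scope ring_scope.

Section Aux.
Variable F : fieldType.
Implicit Types f v : 'rV[F]_4.

Lemma evC f v : ev f v = ev v f.
Proof. by apply: eq_bigr => i _; rewrite mulrC. Qed.

Lemma ev_linr f a b v w : ev f (a *: v + b *: w) = a * ev f v + b * ev f w.
Proof.
rewrite /ev !mulr_sumr -big_split /=; apply: eq_bigr => i _.
rewrite !mxE; ring.
Qed.

Lemma ev_linl f a b v w : ev (a *: v + b *: w) f = a * ev v f + b * ev w f.
Proof. by rewrite evC ev_linr (evC f) (evC f). Qed.

Lemma ev_delta f (l : 'I_4) : ev f (delta_mx 0 l) = f 0 l.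
Proof.
rewrite /ev (bigD1 l) //= big1 ?addr0; first by rewrite !mxE !eqxx /= mulr1.
by move=> j /negPf Hj; rewrite !mxE Hj andbF mulr0.
Qed.

Lemma ev0 f : ev f 0 = 0.
Proof. by rewrite /ev big1 // => i _; rewrite mxE mulr0. Qed.

Lemma key (a b c : 'rV[F]_4) : ev a b != 0 -> ev a c = 0 -> c != 0 ->
  exists d, ev d b = 0 /\ ev d c != 0.
Proof.
move=> Hab Hac Hc.
pose d (i j : 'I_4) : 'rV[F]_4 := b 0 i *: delta_mx 0 j + (- b 0 j) *: delta_mx 0 i.
have Edb i j : ev (d i j) b = 0.
  by rewrite /d ev_linl (evC _ b) (evC _ b) !ev_delta; ring.
have Edc i j : ev (d i j) c = b 0 i * c 0 j - b 0 j * c 0 i.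
  by rewrite /d ev_linl (evC _ c) (evC _ c) !ev_delta; ring.
case: (boolP [exists i : 'I_4, exists j : 'I_4, ev (d i j) c != 0]).
  by move/existsP => [i /existsP [j H]]; exists (d i j).
rewrite negb_exists => /forallP H.
have H' i j : b 0 i * c 0 j = b 0 j * c 0 i.
  have := H i; rewrite negb_exists => /forallP /(_ j); rewrite negbK Edc subr_eq0.
  by move/eqP.
exfalso; move/negP: Hc; apply; apply/eqP/rowP => i; rewrite mxE.
have : c 0 i * ev a b = b 0 i * ev a c.
  rewrite /ev !mulr_sumr; apply: eq_bigr => j _.
  by rewrite mulrCA (mulrC _ (b 0 j)) -H' mulrCA.
rewrite Hac mulr0 => /eqP; rewrite mulf_eq0 (negPf Hab) orbF.
by move/eqP.
Qed.

Arguments key {a b c}.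

Lemma nbrs_scal (u v : vertex F) : is_vertex u -> same_nbrs u v ->
  v.2 = (ev v.2 u.1 / ev u.2 u.1) *: u.2 /\
  v.1 = (ev u.2 v.1 / ev u.2 u.1) *: u.1.
Proof.
case: u v => x f [y g] /= Hu Hs; rewrite /is_vertex /= in Hu.
have G1 w : ev f w = 0 -> ev g w = 0.
  move=> Hfw; case: (eqVneq w 0) => [->|Hw]; first by rewrite ev0.
  have [d [Hdx Hdw]] := key Hu Hfw Hw.
  have Hz : is_vertex (w, d) by [].
  have : perp (x, f) (w, d) by split.
  by move/(Hs _ Hz) => [].
have G2 h : ev h x = 0 -> ev h y = 0.
  move=> Hhx; case: (eqVneq h 0) => [->|Hh].
    by rewrite evC ev0.
  have Hxf : ev x f != 0 by rewrite -evC.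
  have Hxh : ev x h = 0 by rewrite -evC.
  have [d [Hdf Hdh]] := key Hxf Hxh Hh.
  have Hz : is_vertex (d, h) by rewrite /is_vertex /= evC.
  have : perp (x, f) (d, h) by split => //=; rewrite evC.
  by move/(Hs _ Hz) => [].
split.
  apply/rowP => l; rewrite mxE.
  have := G1 (1 *: delta_mx 0 l + (- (f 0 l / ev f x)) *: x).
  rewrite !ev_linr !ev_delta.
  have -> : 1 * f 0 l + - (f 0 l / ev f x) * ev f x = 0 by field.
  move/(_ erefl) => E.
  transitivity (g 0 l - 0); first by rewrite subr0.
  by rewrite -E; field.
apply/rowP => l; rewrite mxE.
have := G2 (1 *: delta_mx 0 l + (- (x 0 l / ev f x)) *: f).
rewrite !ev_linl !(evC (delta_mx 0 l)) !ev_delta.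
have -> : 1 * x 0 l + - (x 0 l / ev f x) * ev f x = 0 by field.
move/(_ erefl) => E.
transitivity (y 0 l - 0); first by rewrite subr0.
by rewrite -E; field.
Qed.

End Aux.

Theorem lemma3p7 (F : fieldType) (k : F) :
  2%N \in [pchar F] -> k != 0 ->
  forall u v w : vertex F,
    is_vertex u -> is_vertex v -> is_vertex w ->
    same_nbrs u v -> perp v w ->
    ell k w u = ell k w v.
Proof.
move=> _ _ [x f] v w Hu Hv Hw Hs _.
have [E2 E1] := @nbrs_scal F (x, f) v Hu Hs.
rewrite /= in E1 E2.
move: (ev v.2 x / ev f x) E2 => s E2.
move: (ev f v.1 / ev f x) E1 => t E1.
rewrite /is_vertex /= in Hu.
move: Hv; rewrite /is_vertex /ell E1 E2 /=.
have Hev : ev (s *: f) (t *: x) = s * t * ev f x.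
  rewrite /ev mulr_sumr; apply: eq_bigr => i _; rewrite !mxE; ring.
rewrite Hev => Hv.
move: (Hv); rewrite !mulf_eq0 !negb_or => /andP [/andP [Hs0 Ht0] He].
have W1 : wedge2 w.1 (t *: x) = t *: wedge2 w.1 x.
  by apply/rowP => P; rewrite !mxE; ring.
have W2 : wedge2 w.2 (s *: f) = s *: wedge2 w.2 f.
  by apply/rowP => P; rewrite !mxE; ring.
have L a (r : 'rV[F]_6) : linform (a *: r) = a *: linform r.
  rewrite /linform scaler_sumr; apply: eq_bigr => i _; by rewrite mxE scalerA.
rewrite W1 W2 /phi -scalemxAl /sym2 !L -scalerAl -scalerAr !scalerA.
congr (_ *: _); field.
by rewrite Hs0 Ht0 He.
Qed.
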